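(* Let $P$ be a pattern and $M$ a $P$-avoiding matrix. Let $z$ be a horizontal 0-run of $M$ and $f\in z$ a 0-entry of this run. Assume there is an embedding $\phi$ of $P$ into $M\Delta f$. Then $P$ has a 1-entry $e$ with $\phi(e)=f$, and moreover every entry of $P$ in the same column as $e$ is mapped by $\phi$ to a column of $M$ that contains an entry of $z$.
   Context: All matrices are binary; rows numbered top to bottom, columns left to right; $(i,j)$ is the entry in row $i$, column $j$; $[k]=\{1,\dots,k\}$. $M\Delta f$ denotes the matrix obtained from $M$ by switching the value of entry $f$. A horizontal 0-run is a maximal set of consecutive 0-entries within one row. An embedding of $P\in\{0,1\}^{k\times\ell}$ into $M\in\{0,1\}^{m\times n}$ is a map $\phi:[k]\times[\ell]\to[m]\times[n]$ sending 1-entries of $P$ to 1-entries of $M$ such that if $e_1=(i_1,j_1)$, $e_2=(i_2,j_2)$ with $\phi(e_1)=(i_1^*,j_1^* )$, $\phi(e_2)=(i_2^*,j_2^* )$, then $i_1<i_2$ implies $i_1^*<i_2^*$ and $j_1<j_2$ implies $j_1^*<j_2^*$. $M$ is $P$-avoiding if there is no embedding of $P$ into $M$ (equivalently, $P$ is not an interval minor of $M$). *)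

(* Defs.v *)
(* Binary matrices are 'M[bool]_(m,n); indices are 0-based
   ordinals ('I_m for rows, 'I_n for columns); entry (i,j) is a pair. *)
From mathcomp Require Import all_boot all_algebra.
Set Implicit Arguments. Unset Strict Implicit. Unset Printing Implicit Defensive.

Definition embedding (k l m n : nat) (P : 'M[bool]_(k, l)) (M : 'M[bool]_(m, n))
    (phi : 'I_k * 'I_l -> 'I_m * 'I_n) : Prop :=
  (forall e : 'I_k * 'I_l, P e.1 e.2 -> M (phi e).1 (phi e).2) /\
  (forall e1 e2 : 'I_k * 'I_l, e1.1 < e2.1 -> (phi e1).1 < (phi e2).1) /\
  (forall e1 e2 : 'I_k * 'I_l, e1.2 < e2.2 -> (phi e1).2 < (phi e2).2).

Definition avoids (k l m n : nat) (P : 'M[bool]_(k, l)) (M : 'M[bool]_(m, n)) : Prop :=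
  ~ exists phi, embedding P M phi.

Definition switch (m n : nat) (M : 'M[bool]_(m, n)) (f : 'I_m * 'I_n) : 'M[bool]_(m, n) :=
  \matrix_(i, j) (if (i, j) == f then ~~ M i j else M i j).

(* z is a horizontal 0-run of M: a maximal set of consecutive 0-entries in one row *)
Definition hzero_run (m n : nat) (M : 'M[bool]_(m, n)) (z : {set 'I_m * 'I_n}) : Prop :=
  exists (r : 'I_m) (a b : nat),
    a <= b /\
    (forall x : 'I_m * 'I_n, x \in z <-> (x.1 = r /\ a <= x.2 <= b)) /\
    (forall j : 'I_n, a <= j <= b -> M r j = false) /\
    (a = 0 \/ exists j : 'I_n, j.+1 = a /\ M r j = true) /\
    (b.+1 = n \/ exists j : 'I_n, (j : nat) = b.+1 /\ M r j = true).

(* Main.v *)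
Require Import Defs.
From mathcomp Require Import all_boot all_algebra.
From mathcomp Require Import zify.

Lemma phi_inj (k l m n : nat) (Q : 'M[bool]_(k, l)) (N : 'M[bool]_(m, n))
   (phi : 'I_k * 'I_l -> 'I_m * 'I_n) e e' :
  embedding Q N phi -> e' != e -> phi e' != phi e.
Proof.
case=> _ [Hr Hc] ne; apply/eqP=> E.
have: (e'.1 != e.1) || (e'.2 != e.2).
  by move: ne; case: e' {E} => a b; case: e => c d; rewrite xpair_eqE negb_and.
case/orP=> H.
- case: (ltngtP e'.1 e.1) => h.
  + by have := Hr _ _ h; rewrite E ltnn.
  + by have := Hr _ _ h; rewrite E ltnn.
  + by move/val_inj: h H => ->; rewrite eqxx.
- case: (ltngtP e'.2 e.2) => h.
  + by have := Hc _ _ h; rewrite E ltnn.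
  + by have := Hc _ _ h; rewrite E ltnn.
  + by move/val_inj: h H => ->; rewrite eqxx.
Qed.

Lemma switch_ne (m n : nat) (M : 'M[bool]_(m, n)) f x :
  x != f -> switch M f x.1 x.2 = M x.1 x.2.
Proof. by rewrite /switch mxE -surjective_pairing => /negbTE ->. Qed.

Lemma repl (k l m n : nat) (P : 'M[bool]_(k, l)) (M : 'M[bool]_(m, n))
   f (phi : 'I_k * 'I_l -> 'I_m * 'I_n) e (y : 'I_n) :
  embedding P (switch M f) phi -> phi e = f -> M f.1 y = true ->
  (forall e' : 'I_k * 'I_l, e'.2 < e.2 -> (phi e').2 < y) ->
  (forall e' : 'I_k * 'I_l, e.2 < e'.2 -> y < (phi e').2) ->
  exists psi, embedding P M psi.
Proof.
move=> Hemb Hf Hy Hlt Hgt.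
exists (fun e' => if e' == e then (f.1, y) else phi e').
have [H1 [Hr Hc]] := Hemb.
split; [|split].
- move=> e' He'; case: eqP => [_|/eqP ne] //.
  have := H1 _ He'; rewrite switch_ne //.
  by rewrite -Hf; apply: phi_inj Hemb ne.
- move=> e1 e2 h; case: eqP => [E1|_]; case: eqP => [E2|_] /=.
  + by move: h; rewrite E1 E2 ltnn.
  + by rewrite -Hf -E1; apply: Hr.
  + by rewrite -Hf -E2; apply: Hr.
  + exact: Hr.
- move=> e1 e2 h; case: eqP => [E1|_]; case: eqP => [E2|_] /=.
  + by move: h; rewrite E1 E2 ltnn.
  + by apply: Hgt; rewrite -E1.
  + by apply: Hlt; rewrite -E2.
  + exact: Hc.
Qed.

Theorem lemma3p7 (k l m n : nat) (P : 'M[bool]_(k, l)) (M : 'M[bool]_(m, n))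
    (z : {set 'I_m * 'I_n}) (f : 'I_m * 'I_n)
    (phi : 'I_k * 'I_l -> 'I_m * 'I_n) :
  avoids P M -> hzero_run M z -> f \in z -> embedding P (switch M f) phi ->
  exists e : 'I_k * 'I_l,
    P e.1 e.2 = true /\ phi e = f /\
    forall i : 'I_k, exists2 x, x \in z & (phi (i, e.2)).2 = x.2.
Proof.
move=> Hav [r [a [b [hab [Hz [H0 [Hl Hrr]]]]]]] fz Hemb.
case: (boolP [exists e, P e.1 e.2 && (phi e == f)]); last first.
  move=> /existsPn Hn; exfalso; apply: Hav; exists phi.
  have [H1 [Hr Hc]] := Hemb; split => // e He.
  have := H1 _ He; rewrite switch_ne //.
  by have := Hn e; rewrite He.
case/existsP=> e /andP [He /eqP Hf].
exists e; split => //; split => // i.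
have [fr fab] := (iffLR (Hz f)) fz.
have [H1 [Hr Hc]] := Hemb.
set c := (phi (i, e.2)).2.
suff: a <= c <= b.
  by move=> hc; exists (r, c) => //; apply/Hz.
apply/andP; split.
- rewrite leqNgt; apply/negP => hca.
  case: Hl => [a0|[j [hj Mj]]]; first by rewrite a0 in hca.
  apply: Hav; apply: (@repl _ _ _ _ P M f phi e j Hemb Hf).
  + by rewrite fr.
  + move=> e' h; have := Hc e' (i, e.2) h; rewrite -/c; lia.
  + move=> e' h; have := Hc e e' h; rewrite Hf; lia.
- rewrite leqNgt; apply/negP => hcb.
  case: Hrr => [bn|[j [hj Mj]]].
    have := ltn_ord c; lia.
  apply: Hav; apply: (@repl _ _ _ _ P M f phi e j Hemb Hf).
  + by rewrite fr.
  + move=> e' h; have := Hc e' e h; rewrite Hf; lia.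
  + move=> e' h; have := Hc (i, e.2) e' h; rewrite -/c; lia.
Qed.
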